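(* Let $F$ be a field of characteristic different from $2$ and $3$ such that $F^2=F$. Let $K_{10}=F\cdot 1\oplus(K_3\otimes K_3)$ be the Kac Jordan superalgebra in the realization described in the context, with $W=(K_3)_{\bar 1}$. Let $G=Sp(W)\wr C_2=(Sp(W)\times Sp(W))\rtimes C_2$, where $C_2=\{1,\epsilon\}$ and $(f,g)\epsilon=\epsilon(g,f)$. Let $\Phi\colon G\to\mathrm{Aut}(K_{10})$ be the group homomorphism determined by: for $(f,g)\in Sp(W)\times Sp(W)$, $\Phi_{(f,g)}(1)=1$ and $\Phi_{(f,g)}(a\otimes b)=\tilde f(a)\otimes\tilde g(b)$, where for $h\in Sp(W)$, $\tilde h$ is the automorphism of $K_3$ with $\tilde h(e)=e$ and $\tilde h(w)=h(w)$ for $w\in W$; and $\Phi(\epsilon)=\delta$, where $\delta(1)=1$ and $\delta(a\otimes b)=(-1)^{\bar a\bar b}\,b\otimes a$ for homogeneous $a,b\in K_3$. Then $\Phi$ is a group isomorphism; in particular $\mathrm{Aut}(K_{10})\cong Sp(W)\wr C_2$.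
   Context: The Kaplansky superalgebra $K_3$ has even part $Fe$ and odd part $W=Fx+Fy$, with products $e^2=e$, $e x=xe=\tfrac12 x$, $e y=ye=\tfrac12 y$, $xy=e$, $yx=-e$, $x^2=y^2=0$. It carries the supersymmetric bilinear form with $(e|e)=\tfrac12$, $(x|y)=1$, $(y|x)=-1$, $(x|x)=(y|y)=0$, and even and odd parts orthogonal. $Sp(W)$ is the group of linear maps of $W$ preserving the alternating form $(\,\cdot\,|\,\cdot\,)|_{W}$. $K_{10}=F\cdot 1\oplus(K_3\otimes K_3)$ is the superalgebra in which $1$ is an even identity element, $a\otimes b$ (for homogeneous $a,b\in K_3$) has parity $\bar a+\bar b$, and $(a\otimes b)(c\otimes d)=(-1)^{\bar b\bar c}\bigl(ac\otimes bd-\tfrac34(a|c)(b|d)1\bigr)$ for homogeneous $a,b,c,d\in K_3$; this is (isomorphic to) the $10$-dimensional Kac Jordan superalgebra. $\mathrm{Aut}(K_{10})$ denotes the group of automorphisms of graded algebras. *)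

(* Defs.v *)
From HB Require Import structures.
From mathcomp Require Import all_boot all_order all_algebra.
Set Implicit Arguments. Unset Strict Implicit. Unset Printing Implicit Defensive.
Import Order.TTheory GRing.Theory Num.Theory.
Local Open Scope ring_scope.

Section Kac.
Variable F : fieldType.

(* K_3 : basis indexed by 'I_3 ; 0 = e (even), 1 = x, 2 = y (odd). *)
Definition K3 := {ffun 'I_3 -> F}.
Definition par (i : 'I_3) : bool := val i != 0%N.
Definition sgn (b : bool) : F := if b then -1 else 1.
Definition e3 (j : 'I_3) : K3 := [ffun t => (t == j)%:R].
Definition sc3 (c : F) (a : K3) : K3 := [ffun t => c * a t].

Definition mult3 (i k : 'I_3) : K3 :=
  match val i, val k with
  | 0%N, 0%N => e3 (inord 0)
  | 0%N, _ => sc3 (2%:R^-1) (e3 k)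
  | _, 0%N => sc3 (2%:R^-1) (e3 i)
  | 1%N, 2%N => e3 (inord 0)
  | 2%N, 1%N => sc3 (-1) (e3 (inord 0))
  | _, _ => [ffun => 0]
  end.

Definition form3 (i k : 'I_3) : F :=
  match val i, val k with
  | 0%N, 0%N => 2%:R^-1
  | 1%N, 2%N => 1
  | 2%N, 1%N => -1
  | _, _ => 0
  end.

(* K_10 = F.1 (+) K_3 (x) K_3 ; coordinates: None = 1, Some (i,j) = e_i (x) e_j *)
Definition K10 := {ffun option ('I_3 * 'I_3) -> F}.
Definition one10 : K10 := [ffun t => if t is None then 1 else 0].
Definition tens (a b : K3) : K10 :=
  [ffun t => match t with None => 0 | Some (i, j) => a i * b j end].
Definition tpart (u : K10) : K10 := [ffun t => if t is None then 0 else u t].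

Definition mul10 (u v : K10) : K10 :=
  [ffun t => u None * v None * one10 t + u None * tpart v t + v None * tpart u t
    + \sum_(i : 'I_3) \sum_(j : 'I_3) \sum_(k : 'I_3) \sum_(l : 'I_3)
        u (Some (i, j)) * v (Some (k, l)) * sgn (par j && par k) *
        (tens (mult3 i k) (mult3 j l) t
          - 3%:R / 4%:R * form3 i k * form3 j l * one10 t)].

Definition is_even10 (v : K10) : Prop :=
  forall i j : 'I_3, par i != par j -> v (Some (i, j)) = 0.
Definition is_odd10 (v : K10) : Prop :=
  v None = 0 /\ forall i j : 'I_3, par i = par j -> v (Some (i, j)) = 0.

Definition isAut10 (phi : K10 -> K10) : Prop :=
  [/\ (forall (a : F) (u v : K10),
         phi [ffun t => a * u t + v t] = [ffun t => a * phi u t + phi v t]),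
      bijective phi,
      (forall u v : K10, phi (mul10 u v) = mul10 (phi u) (phi v)),
      (forall v, is_even10 v -> is_even10 (phi v)) &
      (forall v, is_odd10 v -> is_odd10 (phi v))].

(* W = F x + F y, coordinates as column vectors (x-coordinate, y-coordinate) *)
Definition omega (u v : 'cV[F]_2) : F := u 0 0 * v 1 0 - u 1 0 * v 0 0.
Definition isSp (h : 'M[F]_2) : Prop :=
  h \in unitmx /\ forall u v : 'cV[F]_2, omega (h *m u) (h *m v) = omega u v.

Definition wpart (a : K3) : 'cV[F]_2 := \col_(r < 2) a (lift ord0 r).
Definition htil (h : 'M[F]_2) (a : K3) : K3 :=
  [ffun t => if unlift ord0 t is Some r then (h *m wpart a) r ord0 else a t].

Definition PhiSp (f g : 'M[F]_2) (v : K10) : K10 :=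
  [ffun t => v None * one10 t
     + \sum_(i : 'I_3) \sum_(j : 'I_3)
         v (Some (i, j)) * tens (htil f (e3 i)) (htil g (e3 j)) t].

Definition delta (v : K10) : K10 :=
  [ffun t => match t with
             | None => v None
             | Some (i, j) => sgn (par i && par j) * v (Some (j, i))
             end].

(* elements of Sp(W) wr C_2 as triples (f, g, b) = (f,g) eps^b *)
Definition Phi (w : 'M[F]_2 * 'M[F]_2 * bool) (v : K10) : K10 :=
  PhiSp w.1.1 w.1.2 (if w.2 then delta v else v).

(* (f,g) eps = eps (g,f) *)
Definition Gmul (w1 w2 : 'M[F]_2 * 'M[F]_2 * bool) : 'M[F]_2 * 'M[F]_2 * bool :=
  let: (f1, g1, b1) := w1 in let: (f2, g2, b2) := w2 in
  if b1 then (f1 *m g2, g1 *m f2, ~~ b2) else (f1 *m f2, g1 *m g2, b2).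

Definition inG (w : 'M[F]_2 * 'M[F]_2 * bool) : Prop := isSp w.1.1 /\ isSp w.1.2.

End Kac.

(* Main.v *)
Require Import Defs.
From HB Require Import structures.
From mathcomp Require Import all_boot all_order all_algebra ring.
Import GRing.Theory.
Set Implicit Arguments. Unset Strict Implicit. Unset Printing Implicit Defensive.
Local Open Scope ring_scope.

Definition o0 : 'I_3 := @Ordinal 3 0 isT.
Definition o1 : 'I_3 := @Ordinal 3 1 isT.
Definition o2 : 'I_3 := @Ordinal 3 2 isT.

Lemma sum3 (F : nmodType) (G : 'I_3 -> F) : \sum_(i : 'I_3) G i = G o0 + G o1 + G o2.
Proof.
rewrite !big_ord_recl big_ord0 addr0 addrA; congr (G _ + G _ + G _); exact: val_inj.
Qed.

Lemma I3P (i : 'I_3) : [\/ i = o0, i = o1 | i = o2].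
Proof.
case: i => [[|[|[|n]]] Hi]; [apply: Or31|apply: Or32|apply: Or33|by []]; exact: val_inj.
Qed.

Lemma inord0 : inord 0 = o0 :> 'I_3. Proof. by apply: val_inj; rewrite /= inordK. Qed.

Definition m3 (F : fieldType) (i k t : nat) : F :=
  match i, k, t with
  | 0, 0, 0 => 1
  | 0, 1, 1 => 2^-1
  | 0, 2, 2 => 2^-1
  | 1, 0, 1 => 2^-1
  | 2, 0, 2 => 2^-1
  | 1, 2, 0 => 1
  | 2, 1, 0 => -1
  | _, _, _ => 0
  end.

Lemma mult3E (F : fieldType) (i k t : 'I_3) : mult3 F i k t = m3 F i k t.
Proof.
by case: (I3P i) => ->; case: (I3P k) => ->; case: (I3P t) => ->;
  rewrite /mult3 /= ?inord0 /sc3 /e3 !ffunE /= ?mulr0 ?mulr1.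
Qed.

Lemma mul10S (F : fieldType) (u v : K10 F) a b :
  mul10 u v (Some (a, b)) = u None * v (Some (a,b)) + v None * u (Some (a,b)) +
   \sum_(i : 'I_3) \sum_(j : 'I_3) \sum_(k : 'I_3) \sum_(l : 'I_3)
        u (Some (i, j)) * v (Some (k, l)) * sgn F (par j && par k) *
        (m3 F i k a * m3 F j l b).
Proof.
rewrite /mul10 !ffunE /=; rewrite mulr0 add0r; congr (_ + _).
do 4 (apply eq_bigr; intros).
by rewrite !ffunE !mult3E mulr0 subr0.
Qed.

Lemma mul10N (F : fieldType) (u v : K10 F) :
  mul10 u v None = u None * v None +
   \sum_(i : 'I_3) \sum_(j : 'I_3) \sum_(k : 'I_3) \sum_(l : 'I_3)
        u (Some (i, j)) * v (Some (k, l)) * sgn F (par j && par k) *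
        (- (3%:R / 4%:R * form3 F i k * form3 F j l)).
Proof.
rewrite /mul10 !ffunE /= mulr1 !mulr0 !addr0; congr (_ + _).
do 4 (apply eq_bigr; intros).
by rewrite !ffunE mulr1 add0r.
Qed.

Definition mk10_def (F : fieldType) (n c00 c01 c02 c10 c11 c12 c20 c21 c22 : F) : K10 F :=
  [ffun t => match t with
   | None => n
   | Some (i, j) =>
     match nat_of_ord i, nat_of_ord j with
     | 0, 0 => c00 | 0, 1 => c01 | 0, _ => c02
     | 1, 0 => c10 | 1, 1 => c11 | 1, _ => c12
     | _, 0 => c20 | _, 1 => c21 | _, _ => c22
     end
   end].

Fact mk10_key : unit. Proof. by []. Qed.
Definition mk10 := locked_with mk10_key mk10_def.
Canonical mk10_unlockable := [unlockable fun mk10].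

Lemma K10_mk (F : fieldType) (u : K10 F) : u = mk10 (u None) (u (Some (o0,o0)))
  (u (Some (o0,o1))) (u (Some (o0,o2))) (u (Some (o1,o0))) (u (Some (o1,o1)))
  (u (Some (o1,o2))) (u (Some (o2,o0))) (u (Some (o2,o1))) (u (Some (o2,o2))).
Proof.
apply/ffunP => [[[i j]|]]; rewrite unlock ffunE //.
by case: (I3P i) => ->; case: (I3P j) => ->.
Qed.

Notation cN u := (u None).
Notation c00 u := (u (Some (o0,o0))).
Notation c01 u := (u (Some (o0,o1))).
Notation c02 u := (u (Some (o0,o2))).
Notation c10 u := (u (Some (o1,o0))).
Notation c11 u := (u (Some (o1,o1))).
Notation c12 u := (u (Some (o1,o2))).
Notation c20 u := (u (Some (o2,o0))).
Notation c21 u := (u (Some (o2,o1))).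
Notation c22 u := (u (Some (o2,o2))).

Definition mul10C (F : fieldType) (df dg : F) (aN a00 a01 a02 a10 a11 a12 a20 a21 a22 bN b00 b01 b02 b10 b11 b12 b20 b21 b22 : F) : K10 F := mk10
 (aN*bN - 3%:R/4%:R*2%:R^-1*2%:R^-1 * (a00*b00) - 3%:R/4%:R*2%:R^-1*dg*(a01*b02 - a02*b01)
   - 3%:R/4%:R*2%:R^-1*df*(a10*b20 - a20*b10)
   + 3%:R/4%:R*df*dg*(a11*b22 - a12*b21 - a21*b12 + a22*b11))
 (aN*b00 + bN*a00 + a00*b00 + dg*(a01*b02 - a02*b01) + df*(a10*b20 - a20*b10)
   - df*dg*(a11*b22 - a12*b21 - a21*b12 + a22*b11))
 (aN*b01 + bN*a01 + 2%:R^-1*(a00*b01 + a01*b00 + df*(a10*b21 - a11*b20 - a20*b11 + a21*b10)))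
 (aN*b02 + bN*a02 + 2%:R^-1*(a00*b02 + a02*b00 + df*(a10*b22 - a12*b20 - a20*b12 + a22*b10)))
 (aN*b10 + bN*a10 + 2%:R^-1*(a00*b10 + a10*b00 + dg*(- a01*b12 + a02*b11 + a11*b02 - a12*b01)))
 (aN*b11 + bN*a11 + 2%:R^-1*2%:R^-1*(a00*b11 - a01*b10 + a10*b01 + a11*b00))
 (aN*b12 + bN*a12 + 2%:R^-1*2%:R^-1*(a00*b12 - a02*b10 + a10*b02 + a12*b00))
 (aN*b20 + bN*a20 + 2%:R^-1*(a00*b20 + a20*b00 + dg*(- a01*b22 + a02*b21 + a21*b02 - a22*b01)))
 (aN*b21 + bN*a21 + 2%:R^-1*2%:R^-1*(a00*b21 - a01*b20 + a20*b01 + a21*b00))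
 (aN*b22 + bN*a22 + 2%:R^-1*2%:R^-1*(a00*b22 - a02*b20 + a20*b02 + a22*b00)).

Definition mul10F (F : fieldType) (df dg : F) (a b : K10 F) : K10 F := mul10C df dg (cN a) (c00 a) (c01 a) (c02 a) (c10 a) (c11 a) (c12 a) (c20 a) (c21 a) (c22 a) (cN b) (c00 b) (c01 b) (c02 b) (c10 b) (c11 b) (c12 b) (c20 b) (c21 b) (c22 b).

Lemma mul10E (F : fieldType) (u v : K10 F) : mul10 u v = mul10F 1 1 u v.
Proof.
rewrite [LHS]K10_mk /mul10F /mul10C; congr mk10;
  rewrite ?mul10N ?mul10S !sum3 /= /form3 /=; ring.
Qed.

Lemma mk_N (F : fieldType) (n c00 c01 c02 c10 c11 c12 c20 c21 c22 : F) : mk10 n c00 c01 c02 c10 c11 c12 c20 c21 c22 None = n. Proof. by rewrite unlock ffunE. Qed.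
Lemma mk_00 (F : fieldType) (n c00 c01 c02 c10 c11 c12 c20 c21 c22 : F) : mk10 n c00 c01 c02 c10 c11 c12 c20 c21 c22 (Some (o0,o0)) = c00. Proof. by rewrite unlock ffunE. Qed.
Lemma mk_01 (F : fieldType) (n c00 c01 c02 c10 c11 c12 c20 c21 c22 : F) : mk10 n c00 c01 c02 c10 c11 c12 c20 c21 c22 (Some (o0,o1)) = c01. Proof. by rewrite unlock ffunE. Qed.
Lemma mk_02 (F : fieldType) (n c00 c01 c02 c10 c11 c12 c20 c21 c22 : F) : mk10 n c00 c01 c02 c10 c11 c12 c20 c21 c22 (Some (o0,o2)) = c02. Proof. by rewrite unlock ffunE. Qed.
Lemma mk_10 (F : fieldType) (n c00 c01 c02 c10 c11 c12 c20 c21 c22 : F) : mk10 n c00 c01 c02 c10 c11 c12 c20 c21 c22 (Some (o1,o0)) = c10. Proof. by rewrite unlock ffunE. Qed.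
Lemma mk_11 (F : fieldType) (n c00 c01 c02 c10 c11 c12 c20 c21 c22 : F) : mk10 n c00 c01 c02 c10 c11 c12 c20 c21 c22 (Some (o1,o1)) = c11. Proof. by rewrite unlock ffunE. Qed.
Lemma mk_12 (F : fieldType) (n c00 c01 c02 c10 c11 c12 c20 c21 c22 : F) : mk10 n c00 c01 c02 c10 c11 c12 c20 c21 c22 (Some (o1,o2)) = c12. Proof. by rewrite unlock ffunE. Qed.
Lemma mk_20 (F : fieldType) (n c00 c01 c02 c10 c11 c12 c20 c21 c22 : F) : mk10 n c00 c01 c02 c10 c11 c12 c20 c21 c22 (Some (o2,o0)) = c20. Proof. by rewrite unlock ffunE. Qed.
Lemma mk_21 (F : fieldType) (n c00 c01 c02 c10 c11 c12 c20 c21 c22 : F) : mk10 n c00 c01 c02 c10 c11 c12 c20 c21 c22 (Some (o2,o1)) = c21. Proof. by rewrite unlock ffunE. Qed.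
Lemma mk_22 (F : fieldType) (n c00 c01 c02 c10 c11 c12 c20 c21 c22 : F) : mk10 n c00 c01 c02 c10 c11 c12 c20 c21 c22 (Some (o2,o2)) = c22. Proof. by rewrite unlock ffunE. Qed.
Definition mkE := (mk_N, mk_00, mk_01, mk_02, mk_10, mk_11, mk_12, mk_20, mk_21, mk_22).

Lemma mul10_mk (F : fieldType) (aN a00 a01 a02 a10 a11 a12 a20 a21 a22 bN b00 b01 b02 b10 b11 b12 b20 b21 b22 : F) :
  mul10 (mk10 aN a00 a01 a02 a10 a11 a12 a20 a21 a22) (mk10 bN b00 b01 b02 b10 b11 b12 b20 b21 b22) = mul10C 1 1 aN a00 a01 a02 a10 a11 a12 a20 a21 a22 bN b00 b01 b02 b10 b11 b12 b20 b21 b22.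
Proof. by rewrite mul10E /mul10F !mkE. Qed.

Lemma htil0 (F : fieldType) (h : 'M[F]_2) a : htil h a o0 = a o0.
Proof. by rewrite ffunE; case: unliftP => // k /(congr1 val). Qed.
Lemma htil1 (F : fieldType) (h : 'M[F]_2) a : htil h a o1 = h 0 0 * a o1 + h 0 1 * a o2.
Proof.
rewrite ffunE.
have -> : unlift ord0 o1 = Some 0.
  case: unliftP => [k /(congr1 val) /= E|/(congr1 val) //]; congr Some; apply: val_inj => /=.
  by rewrite /bump /= in E; case: E.
rewrite mxE !big_ord_recl big_ord0 addr0 !mxE; congr (_ * a _ + _ * a _); by [apply: val_inj | congr (h _ _); apply: val_inj].
Qed.
Lemma htil2 (F : fieldType) (h : 'M[F]_2) a : htil h a o2 = h 1 0 * a o1 + h 1 1 * a o2.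
Proof.
rewrite ffunE.
have -> : unlift ord0 o2 = Some 1.
  case: unliftP => [k /(congr1 val) /= E|/(congr1 val) //]; congr Some; apply: val_inj => /=.
  by rewrite /bump /= in E; case: E.
rewrite mxE !big_ord_recl big_ord0 addr0 !mxE; congr (_ * a _ + _ * a _); by [apply: val_inj | congr (h _ _); apply: val_inj].
Qed.
Lemma e3E (F : fieldType) (i t : 'I_3) : e3 F i t = if nat_of_ord t == nat_of_ord i then 1 else 0.
Proof. by rewrite ffunE; case: (I3P i) => ->; case: (I3P t) => ->. Qed.

Lemma tensS (F : fieldType) (a b : K3 F) i j : tens a b (Some (i, j)) = a i * b j.
Proof. by rewrite ffunE. Qed.
Lemma tensN (F : fieldType) (a b : K3 F) : tens a b None = 0.
Proof. by rewrite ffunE. Qed.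

Lemma one10S (F : fieldType) t : one10 F (Some t) = 0.
Proof. by rewrite ffunE. Qed.
Lemma one10N (F : fieldType) : one10 F None = 1.
Proof. by rewrite ffunE. Qed.

Definition PhiSpC (F : fieldType) (f g : 'M[F]_2) (vN v00 v01 v02 v10 v11 v12 v20 v21 v22 : F) : K10 F :=
  mk10 (vN) (v00)
  (g 0 0 * v01 + g 0 1 * v02) (g 1 0 * v01 + g 1 1 * v02)
  (f 0 0 * v10 + f 0 1 * v20)
  (f 0 0 * g 0 0 * v11 + f 0 0 * g 0 1 * v12 + f 0 1 * g 0 0 * v21 + f 0 1 * g 0 1 * v22)
  (f 0 0 * g 1 0 * v11 + f 0 0 * g 1 1 * v12 + f 0 1 * g 1 0 * v21 + f 0 1 * g 1 1 * v22)
  (f 1 0 * v10 + f 1 1 * v20)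
  (f 1 0 * g 0 0 * v11 + f 1 0 * g 0 1 * v12 + f 1 1 * g 0 0 * v21 + f 1 1 * g 0 1 * v22)
  (f 1 0 * g 1 0 * v11 + f 1 0 * g 1 1 * v12 + f 1 1 * g 1 0 * v21 + f 1 1 * g 1 1 * v22).

Lemma PhiSpE (F : fieldType) (f g : 'M[F]_2) v : PhiSp f g v = PhiSpC f g (cN v) (c00 v) (c01 v) (c02 v) (c10 v) (c11 v) (c12 v) (c20 v) (c21 v) (c22 v).
Proof.
rewrite [LHS]K10_mk /PhiSpC; congr mk10; rewrite ffunE !sum3 /= ?tensS ?tensN ?one10S ?one10N
  ?htil0 ?htil1 ?htil2 ?e3E /=; ring.
Qed.

Definition deltaC (F : fieldType) (vN v00 v01 v02 v10 v11 v12 v20 v21 v22 : F) : K10 F :=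
  mk10 (vN) (v00) (v10) (v20) (v01)
  (- v11) (- v21) (v02) (- v12) (- v22).

Lemma deltaE (F : fieldType) (v : K10 F) : delta v = deltaC (cN v) (c00 v) (c01 v) (c02 v) (c10 v) (c11 v) (c12 v) (c20 v) (c21 v) (c22 v).
Proof. by rewrite [LHS]K10_mk /deltaC; congr mk10; rewrite ffunE /= /sgn /= ?mul1r ?mulN1r. Qed.

Lemma PhiSp_mk (F : fieldType) (f g : 'M[F]_2) (vN v00 v01 v02 v10 v11 v12 v20 v21 v22 : F) :
  PhiSp f g (mk10 vN v00 v01 v02 v10 v11 v12 v20 v21 v22) = PhiSpC f g vN v00 v01 v02 v10 v11 v12 v20 v21 v22.
Proof. by rewrite PhiSpE !mkE. Qed.
Lemma delta_mk (F : fieldType) (vN v00 v01 v02 v10 v11 v12 v20 v21 v22 : F) :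
  delta (mk10 vN v00 v01 v02 v10 v11 v12 v20 v21 v22) = deltaC vN v00 v01 v02 v10 v11 v12 v20 v21 v22.
Proof. by rewrite deltaE !mkE. Qed.

Lemma K10_ind (F : fieldType) (P : K10 F -> Prop) :
  (forall aN a00 a01 a02 a10 a11 a12 a20 a21 a22 : F, P (mk10 aN a00 a01 a02 a10 a11 a12 a20 a21 a22)) -> forall u, P u.
Proof. by move=> H u; rewrite (K10_mk u); apply: H. Qed.

Lemma mulF_mk (F : fieldType) (df dg aN a00 a01 a02 a10 a11 a12 a20 a21 a22 bN b00 b01 b02 b10 b11 b12 b20 b21 b22 : F) :
  mul10F df dg (mk10 aN a00 a01 a02 a10 a11 a12 a20 a21 a22) (mk10 bN b00 b01 b02 b10 b11 b12 b20 b21 b22) = mul10C df dg aN a00 a01 a02 a10 a11 a12 a20 a21 a22 bN b00 b01 b02 b10 b11 b12 b20 b21 b22.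
Proof. by rewrite /mul10F !mkE. Qed.

Definition det2 (F : fieldType) (h : 'M[F]_2) := h 0 0 * h 1 1 - h 0 1 * h 1 0.

Lemma I2P (i : 'I_2) : i = 0 \/ i = 1.
Proof. by case: i => [[|[|n]] Hi]; [left|right|]; try apply: val_inj. Qed.
Lemma I1P (i : 'I_1) : i = 0.
Proof. by case: i => [[|n] Hi]; try apply: val_inj. Qed.

Lemma mul22E (F : fieldType) (A B : 'M[F]_2) i j : (A *m B) i j = A i 0 * B 0 j + A i 1 * B 1 j.
Proof.
rewrite mxE !big_ord_recl big_ord0 addr0.
by congr (A i _ * B _ j + A i _ * B _ j); apply: val_inj.
Qed.
Lemma mul21E (F : fieldType) (A : 'M[F]_2) (B : 'cV[F]_2) i j : (A *m B) i j = A i 0 * B 0 j + A i 1 * B 1 j.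
Proof.
rewrite mxE !big_ord_recl big_ord0 addr0.
by congr (A i _ * B _ j + A i _ * B _ j); apply: val_inj.
Qed.

Lemma id22E (F : fieldType) : [/\ (1%:M : 'M[F]_2) 0 0 = 1, (1%:M : 'M[F]_2) 0 1 = 0,
   (1%:M : 'M[F]_2) 1 0 = 0 & (1%:M : 'M[F]_2) 1 1 = 1].
Proof. by rewrite !mxE. Qed.


Ltac intro10 := apply: K10_ind => ? ? ? ? ? ? ? ? ? ?.

Lemma mul10_PhiSp (F : fieldType) (f g : 'M[F]_2) u v :
  mul10 (PhiSp f g u) (PhiSp f g v) = PhiSp f g (mul10F (det2 f) (det2 g) u v).
Proof.
move: u v; intro10; intro10.
rewrite mulF_mk /mul10C !PhiSp_mk /PhiSpC mul10_mk /mul10C /det2.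
congr mk10; ring.
Qed.

Lemma mul10_delta (F : fieldType) (u v : K10 F) :
  mul10 (delta u) (delta v) = delta (mul10 u v).
Proof.
move: u v; intro10; intro10.
rewrite !delta_mk /deltaC !mul10_mk /mul10C delta_mk /deltaC.
congr mk10; ring.
Qed.

Lemma PhiSp_comp (F : fieldType) (f g f' g' : 'M[F]_2) v :
  PhiSp f g (PhiSp f' g' v) = PhiSp (f *m f') (g *m g') v.
Proof.
move: v; intro10.
rewrite !PhiSp_mk /PhiSpC ?PhiSp_mk /PhiSpC !mul22E; congr mk10; ring.
Qed.

Lemma delta_PhiSp (F : fieldType) (f g : 'M[F]_2) v :
  delta (PhiSp f g v) = PhiSp g f (delta v).
Proof.
move: v; intro10.
rewrite ?PhiSp_mk /PhiSpC ?delta_mk /deltaC ?delta_mk /deltaC ?PhiSp_mk /PhiSpC; congr mk10; ring.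
Qed.

Lemma deltaK (F : fieldType) (v : K10 F) : delta (delta v) = v.
Proof.
move: v; intro10.
by rewrite ?delta_mk /deltaC ?delta_mk /deltaC !opprK.
Qed.

Lemma PhiSp11 (F : fieldType) (v : K10 F) : PhiSp 1%:M 1%:M v = v.
Proof.
move: v; intro10.
case: (id22E F) => a b c d.
rewrite PhiSp_mk /PhiSpC a b c d; congr mk10; ring.
Qed.

Lemma mk10_inj (F : fieldType) (aN a00 a01 a02 a10 a11 a12 a20 a21 a22 bN b00 b01 b02 b10 b11 b12 b20 b21 b22 : F) :
  mk10 aN a00 a01 a02 a10 a11 a12 a20 a21 a22 = mk10 bN b00 b01 b02 b10 b11 b12 b20 b21 b22 ->
  [/\ aN = bN, a00 = b00, a01 = b01, a02 = b02 &
  [/\ a10 = b10, a11 = b11, a12 = b12, a20 = b20 & (a21 = b21 /\ a22 = b22)%type]].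
Proof.
move=> E; have C t : mk10 aN a00 a01 a02 a10 a11 a12 a20 a21 a22 t = mk10 bN b00 b01 b02 b10 b11 b12 b20 b21 b22 t by rewrite E. move: (C None) (C (Some (o0,o0))) (C (Some (o0,o1)))
  (C (Some (o0,o2))) (C (Some (o1,o0))) (C (Some (o1,o1))) (C (Some (o1,o2))) (C (Some (o2,o0)))
  (C (Some (o2,o1))) (C (Some (o2,o2))).
by rewrite /= !mkE.
Qed.

Lemma lc_mk (F : fieldType) (x aN a00 a01 a02 a10 a11 a12 a20 a21 a22 bN b00 b01 b02 b10 b11 b12 b20 b21 b22 : F) :
  [ffun t => x * mk10 aN a00 a01 a02 a10 a11 a12 a20 a21 a22 t + mk10 bN b00 b01 b02 b10 b11 b12 b20 b21 b22 t] = mk10 (x * aN + bN) (x * a00 + b00) (x * a01 + b01) (x * a02 + b02) (x * a10 + b10) (x * a11 + b11) (x * a12 + b12) (x * a20 + b20) (x * a21 + b21) (x * a22 + b22).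
Proof. by rewrite [LHS]K10_mk !ffunE !mkE. Qed.

Lemma PhiSp_lin (F : fieldType) (f g : 'M[F]_2) x (u v : K10 F) :
  PhiSp f g [ffun t => x * u t + v t] = [ffun t => x * PhiSp f g u t + PhiSp f g v t].
Proof.
move: u v; intro10; intro10.
rewrite lc_mk !PhiSp_mk /PhiSpC lc_mk; congr mk10; ring.
Qed.

Lemma delta_lin (F : fieldType) x (u v : K10 F) :
  delta [ffun t => x * u t + v t] = [ffun t => x * delta u t + delta v t].
Proof.
move: u v; intro10; intro10.
rewrite lc_mk !delta_mk /deltaC lc_mk; congr mk10; ring.
Qed.

Lemma even_mk_iff (F : fieldType) (aN a00 a01 a02 a10 a11 a12 a20 a21 a22 : F) :
  is_even10 (mk10 aN a00 a01 a02 a10 a11 a12 a20 a21 a22) <-> [/\ a01 = 0, a02 = 0, a10 = 0 & a20 = 0].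
Proof.
split.
  by move=> H; split; [move: (H o0 o1 isT) | move: (H o0 o2 isT) | move: (H o1 o0 isT) | move: (H o2 o0 isT)]; rewrite mkE.
case=> h1 h2 h3 h4 i j.
by case: (I3P i) => ->; case: (I3P j) => -> //= _; rewrite mkE.
Qed.

Lemma odd_mk_iff (F : fieldType) (aN a00 a01 a02 a10 a11 a12 a20 a21 a22 : F) :
  is_odd10 (mk10 aN a00 a01 a02 a10 a11 a12 a20 a21 a22) <-> [/\ aN = 0, a00 = 0, a11 = 0, a12 = 0 & (a21 = 0 /\ a22 = 0)%type].
Proof.
split.
  case=> HN H; rewrite mk_N in HN.
  by split => //; [move: (H o0 o0 erefl) | move: (H o1 o1 erefl) | move: (H o1 o2 erefl) | split; [move: (H o2 o1 erefl) | move: (H o2 o2 erefl)]]; rewrite mkE.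
case=> h0 h1 h2 h3 [h4 h5]; split; first by rewrite mk_N.
move=> i j.
by case: (I3P i) => ->; case: (I3P j) => -> //= _; rewrite mkE.
Qed.

Lemma omega_mx (F : fieldType) (h : 'M[F]_2) u v :
  omega (h *m u) (h *m v) = det2 h * omega u v.
Proof. rewrite /omega /det2 !mul21E; ring. Qed.

Lemma isSp_det (F : fieldType) (h : 'M[F]_2) : isSp h -> det2 h = 1.
Proof.
case=> _ H.
have := H (delta_mx 0 0) (delta_mx 1 0).
rewrite omega_mx /omega !mxE /=.
rewrite mulr1 mulr0 subr0 => /eqP; rewrite -subr_eq0 -[X in _ - X]mul1r -mulrBl mulf_eq0.
case/orP; first by rewrite subr_eq0 => /eqP.
by rewrite oner_eq0.
Qed.

Definition mx2 (F : fieldType) (a b c d : F) : 'M[F]_2 :=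
  \matrix_(i < 2, j < 2) if val i == 0%N then (if val j == 0%N then a else b)
                         else (if val j == 0%N then c else d).

Lemma mx2E (F : fieldType) (a b c d : F) :
  [/\ mx2 a b c d 0 0 = a, mx2 a b c d 0 1 = b, mx2 a b c d 1 0 = c & mx2 a b c d 1 1 = d].
Proof. by rewrite !mxE. Qed.

Lemma det_isSp (F : fieldType) (h : 'M[F]_2) : det2 h = 1 -> isSp h.
Proof.
move=> dh; split; last by move=> u v; rewrite omega_mx dh mul1r.
have [] // := @mulmx1_unit _ _ h (mx2 (h 1 1) (- h 0 1) (- h 1 0) (h 0 0)).
case: (mx2E (h 1 1) (- h 0 1) (- h 1 0) (h 0 0)) => e1 e2 e3 e4.
case: (id22E F) => i1 i2 i3 i4.
apply/matrixP => i j; case: (I2P i) => ->; case: (I2P j) => ->;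
  rewrite mul22E ?e1 ?e2 ?e3 ?e4 ?i1 ?i2 ?i3 ?i4 -?dh /det2; ring.
Qed.

Lemma unit_col0 (F : fieldType) (h : 'M[F]_2) : h \in unitmx -> h 0 0 = 0 -> h 1 0 = 0 -> False.
Proof.
move=> U h0 h1; have := mulVmx U; move/matrixP/(_ 0 0).
rewrite mul22E h0 h1 !mulr0 addr0 mxE /= => /eqP; by rewrite eq_sym oner_eq0.
Qed.

Lemma Phi_aut (F : fieldType) (w : 'M[F]_2 * 'M[F]_2 * bool) : inG w -> isAut10 (Phi w).
Proof.
case: w => [[f g] b] [/= Sf Sg].
have df := isSp_det Sf; have dg := isSp_det Sg.
case: Sf => uf _; case: Sg => ug _.
rewrite /Phi /=; split.
- move=> x u v; case: b; first by rewrite delta_lin PhiSp_lin.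
  exact: PhiSp_lin.
- case: b.
    exists (fun v => delta (PhiSp (invmx f) (invmx g) v)) => v.
      by rewrite PhiSp_comp !mulVmx // PhiSp11 deltaK.
    by rewrite deltaK PhiSp_comp !mulmxV // PhiSp11.
  exists (fun v => PhiSp (invmx f) (invmx g) v) => v.
    by rewrite PhiSp_comp !mulVmx // PhiSp11.
  by rewrite PhiSp_comp !mulmxV // PhiSp11.
- move=> u v; rewrite mul10_PhiSp df dg -mul10E.
  by case: b => //; rewrite mul10_delta.
- case: b; intro10; rewrite even_mk_iff => -[-> -> -> ->];
    rewrite ?delta_mk /deltaC ?PhiSp_mk /PhiSpC even_mk_iff; split; ring.
- case: b; intro10; rewrite odd_mk_iff => -[-> -> -> -> [-> ->]];
    rewrite ?delta_mk /deltaC ?PhiSp_mk /PhiSpC odd_mk_iff; split; try split; ring.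
Qed.

Lemma Phi_mul (F : fieldType) (w1 w2 : 'M[F]_2 * 'M[F]_2 * bool) :
  Phi (Gmul w1 w2) =1 Phi w1 \o Phi w2.
Proof.
case: w1 => [[f1 g1] b1]; case: w2 => [[f2 g2] b2] v.
by case: b1; case: b2; rewrite /Gmul /Phi /= ?delta_PhiSp ?deltaK PhiSp_comp.
Qed.

Definition e01 (F : fieldType) : K10 F := mk10 0 0 1 0 0 0 0 0 0 0.
Definition e02 (F : fieldType) : K10 F := mk10 0 0 0 1 0 0 0 0 0 0.
Definition e10 (F : fieldType) : K10 F := mk10 0 0 0 0 1 0 0 0 0 0.
Definition e20 (F : fieldType) : K10 F := mk10 0 0 0 0 0 0 0 1 0 0.

Lemma PhiF_e (F : fieldType) (f g : 'M[F]_2) :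
  [/\ Phi (f, g, false) (e01 F) = mk10 0 0 (g 0 0) (g 1 0) 0 0 0 0 0 0,
      Phi (f, g, false) (e02 F) = mk10 0 0 (g 0 1) (g 1 1) 0 0 0 0 0 0,
      Phi (f, g, false) (e10 F) = mk10 0 0 0 0 (f 0 0) 0 0 (f 1 0) 0 0 &
      Phi (f, g, false) (e20 F) = mk10 0 0 0 0 (f 0 1) 0 0 (f 1 1) 0 0].
Proof. by split; rewrite /Phi /= PhiSp_mk /PhiSpC; congr mk10; ring. Qed.

Lemma PhiT_e (F : fieldType) (f g : 'M[F]_2) :
  [/\ Phi (f, g, true) (e01 F) = mk10 0 0 0 0 (f 0 0) 0 0 (f 1 0) 0 0,
      Phi (f, g, true) (e02 F) = mk10 0 0 0 0 (f 0 1) 0 0 (f 1 1) 0 0,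
      Phi (f, g, true) (e10 F) = mk10 0 0 (g 0 0) (g 1 0) 0 0 0 0 0 0 &
      Phi (f, g, true) (e20 F) = mk10 0 0 (g 0 1) (g 1 1) 0 0 0 0 0 0].
Proof. by split; rewrite /Phi /= delta_mk /deltaC PhiSp_mk /PhiSpC; congr mk10; ring. Qed.

Lemma Phi_inj (F : fieldType) (w1 w2 : 'M[F]_2 * 'M[F]_2 * bool) :
  inG w1 -> inG w2 -> Phi w1 =1 Phi w2 -> w1 = w2.
Proof.
case: w1 => [[f1 g1] b1]; case: w2 => [[f2 g2] b2] [/= [uf1 _] [ug1 _]] [/= [uf2 _] [ug2 _]] H.
have H1 := H (e01 F); have H2 := H (e02 F); have H3 := H (e10 F); have H4 := H (e20 F).
case: (PhiF_e f1 g1) => A1 A2 A3 A4; case: (PhiT_e f1 g1) => B1 B2 B3 B4.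
case: (PhiF_e f2 g2) => C1 C2 C3 C4; case: (PhiT_e f2 g2) => D1 D2 D3 D4.
case: b1 b2 H H1 H2 H3 H4 => [] [] _;
  rewrite ?A1 ?A2 ?A3 ?A4 ?B1 ?B2 ?B3 ?B4 ?C1 ?C2 ?C3 ?C4 ?D1 ?D2 ?D3 ?D4
  => /mk10_inj [_ _ x1 x2 [x3 _ _ x4 _]] /mk10_inj [_ _ y1 y2 [y3 _ _ y4 _]]
     /mk10_inj [_ _ z1 z2 [z3 _ _ z4 _]] /mk10_inj [_ _ t1 t2 [t3 _ _ t4 _]].
- suff [-> ->] : f1 = f2 /\ g1 = g2 by [].
  split; apply/matrixP => i j; case: (I2P i) => ->; case: (I2P j) => -> //.
- by case: (unit_col0 uf1 x3 x4).
- by case: (unit_col0 ug1 x1 x2).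
- suff [-> ->] : f1 = f2 /\ g1 = g2 by [].
  split; apply/matrixP => i j; case: (I2P i) => ->; case: (I2P j) => -> //.
Qed.

Definition z0 (F : fieldType) : K10 F := mk10 0 0 0 0 0 0 0 0 0 0.
Definition eN (F : fieldType) : K10 F := mk10 1 0 0 0 0 0 0 0 0 0.
Definition e00 (F : fieldType) : K10 F := mk10 0 1 0 0 0 0 0 0 0 0.
Definition e11 (F : fieldType) : K10 F := mk10 0 0 0 0 0 1 0 0 0 0.
Definition e12 (F : fieldType) : K10 F := mk10 0 0 0 0 0 0 1 0 0 0.
Definition e21 (F : fieldType) : K10 F := mk10 0 0 0 0 0 0 0 0 1 0.
Definition e22 (F : fieldType) : K10 F := mk10 0 0 0 0 0 0 0 0 0 1.
Definition g0vec (F : fieldType) : K10 F := mk10 (- (3%:R / 4%:R * 2%:R^-1)) 1 0 0 0 0 0 0 0 0.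

Lemma aut_z0 (F : fieldType) (phi : K10 F -> K10 F) : isAut10 phi -> phi (z0 F) = z0 F.
Proof.
case=> lin _ _ _ _.
have H := lin (-1) (z0 F) (z0 F).
have E1 : [ffun t => -1 * z0 F t + z0 F t] = z0 F by rewrite /z0 lc_mk; congr mk10; ring.
rewrite E1 in H; rewrite H [LHS]K10_mk /z0; congr mk10; rewrite ffunE; ring.
Qed.

Lemma mul10_1r (F : fieldType) (u : K10 F) : mul10 u (eN F) = u.
Proof. move: u; intro10; rewrite /eN mul10_mk /mul10C; congr mk10; ring. Qed.
Lemma mul10_1l (F : fieldType) (u : K10 F) : mul10 (eN F) u = u.
Proof. move: u; intro10; rewrite /eN mul10_mk /mul10C; congr mk10; ring. Qed.

Lemma aut_eN (F : fieldType) (phi : K10 F -> K10 F) : isAut10 phi -> phi (eN F) = eN F.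
Proof.
case=> _ [psi c1 c2] mul _ _.
by rewrite -[LHS]mul10_1r -{2}(c2 (eN F)) -mul mul10_1l c2.
Qed.

Lemma aut_lc (F : fieldType) (phi : K10 F -> K10 F) : isAut10 phi ->
  forall x (u v : K10 F), phi [ffun t => x * u t + v t] = [ffun t => x * phi u t + phi v t].
Proof. by case. Qed.

Lemma aut_span (F : fieldType) (phi : K10 F -> K10 F) x y : isAut10 phi ->
  phi (e00 F) = e00 F -> phi (mk10 x y 0 0 0 0 0 0 0 0) = mk10 x y 0 0 0 0 0 0 0 0.
Proof.
move=> A H0.
have -> : mk10 x y 0 0 0 0 0 0 0 0 = [ffun t => x * eN F t + [ffun t => y * e00 F t + z0 F t] t].
  by rewrite /eN /e00 /z0 !lc_mk; congr mk10; ring.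
rewrite !(aut_lc A) (aut_eN A) H0 (aut_z0 A) /eN /e00 /z0 !lc_mk; congr mk10; ring.
Qed.

Lemma aut_odd_pre (F : fieldType) (phi : K10 F -> K10 F) u : isAut10 phi -> is_odd10 u ->
  exists2 z, is_odd10 z & phi z = u.
Proof.
move=> A Hu; have [lin [psi c1 c2] mul ev od] := A.
set z := psi u.
pose zev := mk10 (cN z) (c00 z) 0 0 0 (c11 z) (c12 z) 0 (c21 z) (c22 z).
pose zod := mk10 0 0 (c01 z) (c02 z) (c10 z) 0 0 (c20 z) 0 0.
have Ez : z = [ffun t => 1 * zev t + zod t].
  by rewrite lc_mk [LHS]K10_mk; congr mk10; ring.
have Hev : is_even10 (phi zev) by apply: ev; rewrite even_mk_iff.
have Hod : is_odd10 (phi zod) by apply: od; rewrite odd_mk_iff.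
have Hsum : [ffun t => 1 * phi zev t + phi zod t] = u by rewrite -lin -Ez /z c2.
have S t : phi zev t + phi zod t = u t.
  by rewrite -Hsum ffunE mul1r.
case: Hod => HoN Ho; case: Hu => HuN Hu.
have Sev t : u t = 0 -> phi zod t = 0 -> phi zev t = 0.
  by move=> h1 h2; rewrite -[phi zev t]addr0 -h2 S h1.
have A0 : phi zev = z0 F.
  rewrite [LHS]K10_mk /z0; congr mk10.
  all: try by apply: Hev.
  all: try by apply: Sev; [apply: Hu | apply: Ho].
  all: try by apply: Sev.
have Zev : zev = z0 F by rewrite -(c1 zev) A0 -{1}(aut_z0 A) c1.
have Zz : z = zod.
  by rewrite Ez Zev /z0 /zod lc_mk; congr mk10; ring.
exists zod; [by rewrite odd_mk_iff | by rewrite -Zz /z c2].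
Qed.

Lemma eq_diff (F : fieldType) (a b : F) : a = b -> a - b = 0.
Proof. by move=> ->; rewrite subrr. Qed.
Lemma lin1 (F : fieldType) (x a P : F) : x = 0 -> P = a * x -> P = 0.
Proof. by move=> -> ->; rewrite mulr0. Qed.
Lemma lin2 (F : fieldType) (x y a b P : F) : x = 0 -> y = 0 -> P = a * x + b * y -> P = 0.
Proof. by move=> -> -> ->; rewrite !mulr0 addr0. Qed.
Lemma lin3 (F : fieldType) (x y z a b c P : F) : x = 0 -> y = 0 -> z = 0 ->
  P = a * x + b * y + c * z -> P = 0.
Proof. by move=> -> -> -> ->; rewrite !mulr0 !addr0. Qed.
Lemma prod0 (F : fieldType) (x y : F) : x * y = 0 -> y != 0 -> x = 0.
Proof. by move/eqP; rewrite mulf_eq0 => /orP[/eqP //|/eqP -> /eqP]. Qed.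
Lemma sub0_eq (F : fieldType) (x y : F) : x - y = 0 -> x = y.
Proof. by move/eqP; rewrite subr_eq0 => /eqP. Qed.

Lemma four_ne0 (F : fieldType) : (2%:R : F) != 0 -> (4%:R : F) != 0.
Proof. by move=> h; rewrite -[4%N]/(2 * 2)%N natrM mulf_neq0. Qed.

Lemma odd_e (F : fieldType) : [/\ is_odd10 (e01 F), is_odd10 (e02 F), is_odd10 (e10 F) & is_odd10 (e20 F)].
Proof. by split; rewrite odd_mk_iff. Qed.

Lemma mul10_e00_odd (F : fieldType) (z : K10 F) : is_odd10 z ->
  mul10 (e00 F) z = [ffun t => 2%:R^-1 * z t + z0 F t].
Proof.
move: z; apply: K10_ind => aN a00 a01 a02 a10 a11 a12 a20 a21 a22.
rewrite odd_mk_iff => -[-> -> -> -> [-> ->]].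
rewrite /e00 /z0 mul10_mk /mul10C lc_mk; congr mk10; ring.
Qed.

Lemma mul10_g0 (F : fieldType) : mul10 (e01 F) (e02 F) = g0vec F /\ mul10 (e10 F) (e20 F) = g0vec F.
Proof. by split; rewrite /g0vec mul10_mk /mul10C; congr mk10; ring. Qed.

Lemma mul10_e01_e10 (F : fieldType) :
  mul10 (e01 F) (e10 F) = mk10 0 0 0 0 0 (- (2%:R^-1 * 2%:R^-1)) 0 0 0 0.
Proof. by rewrite mul10_mk /mul10C; congr mk10; ring. Qed.

Lemma fixE_alg (F : fieldType) (char2 : (2%:R : F) != 0) (q u1 u2 : K10 F) :
  is_even10 q -> is_odd10 u1 -> is_odd10 u2 ->
  mul10 q (e01 F) = [ffun t => 2%:R^-1 * e01 F t + z0 F t] ->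
  mul10 u1 u2 = [ffun t => (- (3%:R / 4%:R * 2%:R^-1)) * eN F t + [ffun t => 1 * q t + z0 F t] t] ->
  mul10 q (e02 F) = [ffun t => 2%:R^-1 * e02 F t + z0 F t] ->
  q = e00 F.
Proof.
have c4 := four_ne0 char2.
move: q u1 u2; apply: K10_ind => qN q00 q01 q02 q10 q11 q12 q20 q21 q22.
apply: K10_ind => aN a00 a01 a02 a10 a11 a12 a20 a21 a22.
apply: K10_ind => bN b00 b01 b02 b10 b11 b12 b20 b21 b22.
rewrite even_mk_iff !odd_mk_iff => -[-> -> -> ->] [-> -> -> -> [-> ->]] [-> -> -> -> [-> ->]].
rewrite /e01 /e02 /eN /z0 !mul10_mk /mul10C !lc_mk.
move=> /mk10_inj [_ _ hA _ [h10 _ _ h20 _]] /mk10_inj [hN h00 _ _ _] /mk10_inj [_ _ _ _ [k10 _ _ k20 _]].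
have e1 : q00 - 1 = 0.
  apply: (lin3 (a := 8%:R) (b := 8%:R) (c := 3%:R) (eq_diff hA) (eq_diff hN) (eq_diff h00)).
  by field; rewrite ?c4 ?char2.
rewrite /e00; congr mk10.
- apply: (lin3 (a := -3%:R) (b := -4%:R) (c := -(3%:R / 2%:R)) (eq_diff hA) (eq_diff hN) (eq_diff h00)).
  by field; rewrite ?c4 ?char2.
- exact: sub0_eq.
- apply: (lin1 (a := 2%:R) (eq_diff k10)); by field; rewrite ?c4 ?char2.
- apply: (lin1 (a := -2%:R) (eq_diff h10)); by field; rewrite ?c4 ?char2.
- apply: (lin1 (a := 2%:R) (eq_diff k20)); by field; rewrite ?c4 ?char2.
- apply: (lin1 (a := -2%:R) (eq_diff h20)); by field; rewrite ?c4 ?char2.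
Qed.

Lemma aut_e00 (F : fieldType) (char2 : (2%:R : F) != 0) (phi : K10 F -> K10 F) :
  isAut10 phi -> phi (e00 F) = e00 F.
Proof.
move=> A; have [lin [psi c1 c2] mul ev od] := A.
have Hq : is_even10 (phi (e00 F)) by apply: ev; rewrite /e00 even_mk_iff.
have half u : is_odd10 u -> mul10 (phi (e00 F)) u = [ffun t => 2%:R^-1 * u t + z0 F t].
  move=> Hu; have [z Hz <-] := aut_odd_pre A Hu.
  by rewrite -mul mul10_e00_odd // lin (aut_z0 A).
case: (odd_e F) => o1 o2 o3 o4.
apply: (fixE_alg char2 Hq (od _ o1) (od _ o2) (half _ o1) _ (half _ o2)).
rewrite -mul (proj1 (mul10_g0 F)).
have -> : g0vec F = [ffun t => (- (3%:R / 4%:R * 2%:R^-1)) * eN F t + [ffun t => 1 * e00 F t + z0 F t] t].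
  by rewrite /eN /e00 /z0 !lc_mk /g0vec; congr mk10; ring.
by rewrite !lin (aut_eN A) (aut_z0 A).
Qed.

Lemma aut_g0 (F : fieldType) (char2 : (2%:R : F) != 0) (phi : K10 F -> K10 F) :
  isAut10 phi -> phi (g0vec F) = g0vec F.
Proof. by move=> A; rewrite /g0vec aut_span // aut_e00. Qed.

Lemma pair_dich (F : fieldType) (char2 : (2%:R : F) != 0) (u v : K10 F) : is_odd10 u -> is_odd10 v -> mul10 u v = g0vec F ->
  [/\ c10 u = 0, c20 u = 0, c10 v = 0 & c20 v = 0] \/ [/\ c01 u = 0, c02 u = 0, c01 v = 0 & c02 v = 0].
Proof.
move: u v; apply: K10_ind => aN a00 a01 a02 a10 a11 a12 a20 a21 a22.
apply: K10_ind => bN b00 b01 b02 b10 b11 b12 b20 b21 b22.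
rewrite !odd_mk_iff => -[-> -> -> -> [-> ->]] [-> -> -> -> [-> ->]].
rewrite /g0vec mul10_mk /mul10C => /mk10_inj [_ h00 _ _ [_ h11 h12 _ [h21 h22]]].
rewrite !mkE.
have hD : (a01 * b02 - a02 * b01) + (a10 * b20 - a20 * b10) - 1 = 0.
  by apply: (lin1 (a := 1) (eq_diff h00)); ring.
have [zD1|nD1] := eqVneq (a01 * b02 - a02 * b01) 0.
  have nD2 : (a10 * b20 - a20 * b10) != 0.
    apply/eqP => zD2; move: hD; rewrite zD1 zD2 add0r sub0r => /eqP.
    by rewrite oppr_eq0 oner_eq0.
  right; split; apply: (prod0 _ nD2).
  - apply: (lin2 (a := -(4%:R * a10)) (b := 4%:R * a20) (eq_diff h21) (eq_diff h11)).
    by field; rewrite ?char2.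
  - apply: (lin2 (a := -(4%:R * a10)) (b := 4%:R * a20) (eq_diff h22) (eq_diff h12)).
    by field; rewrite ?char2.
  - apply: (lin2 (a := -(4%:R * b10)) (b := 4%:R * b20) (eq_diff h21) (eq_diff h11)).
    by field; rewrite ?char2.
  - apply: (lin2 (a := -(4%:R * b10)) (b := 4%:R * b20) (eq_diff h22) (eq_diff h12)).
    by field; rewrite ?char2.
left; split; apply: (prod0 _ nD1).
- apply: (lin2 (a := 4%:R * a01) (b := -(4%:R * a02)) (eq_diff h12) (eq_diff h11)).
  by field; rewrite ?char2.
- apply: (lin2 (a := 4%:R * a01) (b := -(4%:R * a02)) (eq_diff h22) (eq_diff h21)).
  by field; rewrite ?char2.
- apply: (lin2 (a := 4%:R * b01) (b := -(4%:R * b02)) (eq_diff h12) (eq_diff h11)).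
  by field; rewrite ?char2.
- apply: (lin2 (a := 4%:R * b01) (b := -(4%:R * b02)) (eq_diff h22) (eq_diff h21)).
  by field; rewrite ?char2.
Qed.

Lemma same_half (F : fieldType) (u v : K10 F) : is_odd10 u -> is_odd10 v ->
  [/\ c10 u = 0, c20 u = 0, c10 v = 0 & c20 v = 0] \/ [/\ c01 u = 0, c02 u = 0, c01 v = 0 & c02 v = 0] ->
  exists x y, mul10 u v = mk10 x y 0 0 0 0 0 0 0 0.
Proof.
move: u v; apply: K10_ind => aN a00 a01 a02 a10 a11 a12 a20 a21 a22.
apply: K10_ind => bN b00 b01 b02 b10 b11 b12 b20 b21 b22.
rewrite !odd_mk_iff => -[-> -> -> -> [-> ->]] [-> -> -> -> [-> ->]].
rewrite !mkE mul10_mk /mul10C.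
by case=> -[-> -> -> ->]; do 2 eexists; congr mk10; try reflexivity; ring.
Qed.

Lemma no_same (F : fieldType) (char2 : (2%:R : F) != 0) (phi : K10 F -> K10 F) :
  isAut10 phi ->
  [/\ c10 (phi (e01 F)) = 0, c20 (phi (e01 F)) = 0, c10 (phi (e10 F)) = 0 & c20 (phi (e10 F)) = 0]
  \/ [/\ c01 (phi (e01 F)) = 0, c02 (phi (e01 F)) = 0, c01 (phi (e10 F)) = 0 & c02 (phi (e10 F)) = 0] ->
  False.
Proof.
move=> A H; have [lin [psi c1 c2] mul ev od] := A.
case: (odd_e F) => o1 o2 o3 o4.
have [x [y Hxy]] := same_half (od _ o1) (od _ o3) H.
have : phi (mul10 (e01 F) (e10 F)) = phi (mk10 x y 0 0 0 0 0 0 0 0).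
  by rewrite mul Hxy aut_span // aut_e00.
move/(can_inj c1); rewrite mul10_e01_e10 => /mk10_inj [_ _ _ _ [_ /eqP]].
by rewrite oppr_eq0 mulf_eq0 invr_eq0 orbb (negbTE char2).
Qed.

Lemma odd_U1 (F : fieldType) (u : K10 F) : is_odd10 u -> c10 u = 0 -> c20 u = 0 ->
  u = mk10 0 0 (c01 u) (c02 u) 0 0 0 0 0 0.
Proof.
move=> [HN H] h1 h2; rewrite [LHS]K10_mk HN h1 h2 (H o0 o0) // (H o1 o1) // (H o1 o2) // (H o2 o1) // (H o2 o2) //.
Qed.
Lemma odd_U2 (F : fieldType) (u : K10 F) : is_odd10 u -> c01 u = 0 -> c02 u = 0 ->
  u = mk10 0 0 0 0 (c10 u) 0 0 (c20 u) 0 0.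
Proof.
move=> [HN H] h1 h2; rewrite [LHS]K10_mk HN h1 h2 (H o0 o0) // (H o1 o1) // (H o1 o2) // (H o2 o1) // (H o2 o2) //.
Qed.

Lemma aut_expand (F : fieldType) (phi : K10 F -> K10 F) : isAut10 phi ->
  forall v, phi v = [ffun t => cN v * phi (eN F) t + [ffun t => c00 v * phi (e00 F) t + [ffun t => c01 v * phi (e01 F) t + [ffun t => c02 v * phi (e02 F) t + [ffun t => c10 v * phi (e10 F) t + [ffun t => c11 v * phi (e11 F) t + [ffun t => c12 v * phi (e12 F) t + [ffun t => c20 v * phi (e20 F) t + [ffun t => c21 v * phi (e21 F) t + [ffun t => c22 v * phi (e22 F) t + phi (z0 F) t] t] t] t] t] t] t] t] t] t].
Proof.
move=> A v.
have E : v = [ffun t => cN v * (eN F) t + [ffun t => c00 v * (e00 F) t + [ffun t => c01 v * (e01 F) t + [ffun t => c02 v * (e02 F) t + [ffun t => c10 v * (e10 F) t + [ffun t => c11 v * (e11 F) t + [ffun t => c12 v * (e12 F) t + [ffun t => c20 v * (e20 F) t + [ffun t => c21 v * (e21 F) t + [ffun t => c22 v * (e22 F) t + z0 F t] t] t] t] t] t] t] t] t] t].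
  by rewrite /eN /e00 /e01 /e02 /e10 /e11 /e12 /e20 /e21 /e22 /z0 !lc_mk [LHS]K10_mk; congr mk10; ring.
by rewrite {1}E !(aut_lc A).
Qed.

Lemma eij_def (F : fieldType) (char2 : (2%:R : F) != 0) :
  [/\ e11 F = [ffun t => (-4%:R) * mul10 (e01 F) (e10 F) t + z0 F t],
      e12 F = [ffun t => (-4%:R) * mul10 (e02 F) (e10 F) t + z0 F t],
      e21 F = [ffun t => (-4%:R) * mul10 (e01 F) (e20 F) t + z0 F t] &
      e22 F = [ffun t => (-4%:R) * mul10 (e02 F) (e20 F) t + z0 F t]].
Proof.
have c4 := four_ne0 char2.
by split; rewrite /e11 /e12 /e21 /e22 /e01 /e02 /e10 /e20 /z0 !mul10_mk /mul10C lc_mk; congr mk10;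
  field; rewrite ?c4 ?char2.
Qed.

Lemma aut_agree (F : fieldType) (char2 : (2%:R : F) != 0) (phi1 phi2 : K10 F -> K10 F) :
  isAut10 phi1 -> isAut10 phi2 ->
  phi1 (e01 F) = phi2 (e01 F) -> phi1 (e02 F) = phi2 (e02 F) ->
  phi1 (e10 F) = phi2 (e10 F) -> phi1 (e20 F) = phi2 (e20 F) -> phi1 =1 phi2.
Proof.
move=> A1 A2 h01 h02 h10 h20 v.
have [l1 _ m1 _ _] := A1; have [l2 _ m2 _ _] := A2.
case: (eij_def char2) => E11 E12 E21 E22.
rewrite (aut_expand A1) (aut_expand A2) (aut_eN A1) (aut_eN A2) (aut_e00 char2 A1) (aut_e00 char2 A2)
  (aut_z0 A1) (aut_z0 A2) h01 h02 h10 h20 E11 E12 E21 E22 !l1 !l2 !m1 !m2 h01 h02 h10 h20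
  (aut_z0 A1) (aut_z0 A2).
by [].
Qed.

Lemma caseA (F : fieldType) (char2 : (2%:R : F) != 0) (phi : K10 F -> K10 F) : isAut10 phi ->
  [/\ c10 (phi (e01 F)) = 0, c20 (phi (e01 F)) = 0, c10 (phi (e02 F)) = 0 & c20 (phi (e02 F)) = 0] ->
  [/\ c01 (phi (e10 F)) = 0, c02 (phi (e10 F)) = 0, c01 (phi (e20 F)) = 0 & c02 (phi (e20 F)) = 0] ->
  exists f g, inG (f, g, false) /\ phi =1 Phi (f, g, false).
Proof.
move=> A [h1 h2 h3 h4] [k1 k2 k3 k4].
have [lin bij mul ev od] := A.
case: (odd_e F) => o1 o2 o3 o4.
have E1 := odd_U1 (od _ o1) h1 h2; have E2 := odd_U1 (od _ o2) h3 h4.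
have E3 := odd_U2 (od _ o3) k1 k2; have E4 := odd_U2 (od _ o4) k3 k4.
have [G12 G34] := mul10_g0 F.
have P12 : mul10 (phi (e01 F)) (phi (e02 F)) = g0vec F by rewrite -mul G12 (aut_g0 char2 A).
have P34 : mul10 (phi (e10 F)) (phi (e20 F)) = g0vec F by rewrite -mul G34 (aut_g0 char2 A).
rewrite {1}E1 {1}E2 mul10_mk /mul10C /g0vec in P12.
rewrite {1}E3 {1}E4 mul10_mk /mul10C /g0vec in P34.
case/mk10_inj: P12 => _ d12 _ _ _.
case/mk10_inj: P34 => _ d34 _ _ _.
pose f0 := mx2 (c10 (phi (e10 F))) (c10 (phi (e20 F))) (c20 (phi (e10 F))) (c20 (phi (e20 F))).
pose g0 := mx2 (c01 (phi (e01 F))) (c01 (phi (e02 F))) (c02 (phi (e01 F))) (c02 (phi (e02 F))).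
have [f00 f01 f10 f11] := mx2E (c10 (phi (e10 F))) (c10 (phi (e20 F))) (c20 (phi (e10 F))) (c20 (phi (e20 F))).
have [g00 g01 g10 g11] := mx2E (c01 (phi (e01 F))) (c01 (phi (e02 F))) (c02 (phi (e01 F))) (c02 (phi (e02 F))).
have HG : inG (f0, g0, false).
  rewrite /inG /=; split; apply: det_isSp; rewrite /det2 /f0 /g0 ?f00 ?f01 ?f10 ?f11 ?g00 ?g01 ?g10 ?g11;
    apply: sub0_eq.
  - by apply: (lin1 (a := 1) (eq_diff d34)); ring.
  - by apply: (lin1 (a := 1) (eq_diff d12)); ring.
exists f0, g0; split => //.
case: (PhiF_e f0 g0) => P1 P2 P3 P4.
apply: (aut_agree char2 A (Phi_aut HG));
  rewrite ?P1 ?P2 ?P3 ?P4 /f0 /g0 ?f00 ?f01 ?f10 ?f11 ?g00 ?g01 ?g10 ?g11;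
  first [exact: E1 | exact: E2 | exact: E3 | exact: E4].
Qed.

Lemma delta_aut (F : fieldType) : isAut10 (@delta F).
Proof.
split.
- exact: delta_lin.
- by exists (@delta F) => v; rewrite deltaK.
- by move=> u v; rewrite mul10_delta.
- intro10; rewrite even_mk_iff => -[-> -> -> ->]; rewrite delta_mk /deltaC even_mk_iff; by split.
- intro10; rewrite odd_mk_iff => -[-> -> -> -> [-> ->]]; rewrite delta_mk /deltaC odd_mk_iff !oppr0.
  by split.
Qed.

Lemma aut_comp (F : fieldType) (p1 p2 : K10 F -> K10 F) :
  isAut10 p1 -> isAut10 p2 -> isAut10 (fun v => p1 (p2 v)).
Proof.
case=> l1 b1 m1 e1 o1 [l2 b2 m2 e2 o2]; split.
- by move=> x u v; rewrite l2 l1.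
- exact: bij_comp.
- by move=> u v; rewrite m2 m1.
- by move=> v /e2 /e1.
- by move=> v /o2 /o1.
Qed.

Lemma delta_e (F : fieldType) :
  [/\ delta (e01 F) = e10 F, delta (e02 F) = e20 F, delta (e10 F) = e01 F & delta (e20 F) = e02 F].
Proof. by split; rewrite delta_mk /deltaC; congr mk10; rewrite oppr0. Qed.

Lemma aut_classify (F : fieldType) (char2 : (2%:R : F) != 0) (phi : K10 F -> K10 F) :
  isAut10 phi -> exists2 w, inG w & phi =1 Phi w.
Proof.
move=> A; have [lin bij mul ev od] := A.
case: (odd_e F) => o1 o2 o3 o4.
have [G12 G34] := mul10_g0 F.
have P12 : mul10 (phi (e01 F)) (phi (e02 F)) = g0vec F by rewrite -mul G12 (aut_g0 char2 A).
have P34 : mul10 (phi (e10 F)) (phi (e20 F)) = g0vec F by rewrite -mul G34 (aut_g0 char2 A).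
case: (pair_dich char2 (od _ o1) (od _ o2) P12) => H12;
  case: (pair_dich char2 (od _ o3) (od _ o4) P34) => H34.
- exfalso; apply: (no_same char2 A); left.
  by case: H12 => ? ? _ _; case: H34 => ? ? _ _; split.
- have [f [g [HG E]]] := caseA char2 A H12 H34.
  by exists (f, g, false).
- have Ap := aut_comp A (@delta_aut F).
  case: (delta_e F) => D1 D2 D3 D4.
  have := caseA char2 Ap; rewrite /= D1 D2 D3 D4 => /(_ H34 H12) [f [g [HG E]]].
  exists (f, g, true) => // v.
  by have := E (delta v); rewrite deltaK /Phi /= => ->.
- exfalso; apply: (no_same char2 A); right.
  by case: H12 => ? ? _ _; case: H34 => ? ? _ _; split.
Qed.

Unset Implicit Arguments.

Theorem theorem3p3 (F : fieldType)
  (char2 : (2%:R : F) != 0) (char3 : (3%:R : F) != 0)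
  (sq : forall a : F, exists b : F, a = b * b) :
  [/\ (forall w : 'M[F]_2 * 'M[F]_2 * bool, inG w -> isAut10 (Phi w)),
      (forall w1 w2 : 'M[F]_2 * 'M[F]_2 * bool, inG w1 -> inG w2 ->
         Phi (Gmul w1 w2) =1 Phi w1 \o Phi w2),
      (forall w1 w2 : 'M[F]_2 * 'M[F]_2 * bool, inG w1 -> inG w2 ->
         Phi w1 =1 Phi w2 -> w1 = w2) &
      (forall phi : K10 F -> K10 F, isAut10 phi ->
         exists2 w : 'M[F]_2 * 'M[F]_2 * bool, inG w & phi =1 Phi w)].
Proof.
split.
- by move=> w; apply: Phi_aut.
- by move=> w1 w2 _ _; apply: Phi_mul.
- by move=> w1 w2; apply: Phi_inj.
- by move=> phi; apply: aut_classify.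
Qed.
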